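(* Fix finite $\mathcal{S}$, $\mathcal{A}$, $d_0\in\Delta(\mathcal{S})$, $\gamma\in[0,1)$ and a reward $\mathcal{R}:\mathcal{S}\times\mathcal{A}\to[0,1]$. Let $\mathcal{T}\neq\mathcal{T}'$ be transition models and $\delta=\frac12\max_{s,a}\|\mathcal{T}(\cdot\mid s,a)-\mathcal{T}'(\cdot\mid s,a)\|_1>0$. For $\varepsilon>0$ define $$H(\varepsilon,\delta)=\frac{(1+\varepsilon)+\sqrt{(1-\varepsilon)^2+4\varepsilon/\delta}}{2}.$$ If $1/(1-\gamma)\le H(\varepsilon,\delta)$, then $(\mathcal{T},\mathcal{T}')$ is $\varepsilon$-unexploitable relative to every policy set $\Pi$ and the task $(\mathcal{S},\mathcal{A},\_,d_0,\mathcal{R},\gamma)$. Moreover, the bound is tight: for every $\delta\in(0,1]$, $\varepsilon>0$ and $\gamma$ with $1/(1-\gamma)>H(\varepsilon,\delta)$, there exist a task with reward in $[0,1]$ (namely $\mathcal{S}=\mathcal{A}=\{0,1\}$, $d_0(0)=1$, $\mathcal{R}(s,a)=\mathbb{1}\{s=0\}$) and transition models $\mathcal{T}_1,\mathcal{T}_2$ with $\frac12\max_{s,a}\|\mathcal{T}_1(\cdot\mid s,a)-\mathcal{T}_2(\cdot\mid s,a)\|_1=\delta$ that are $\varepsilon$-exploitable relative to the set of stationary policies; specifically, state $1$ absorbing under both, and at state $0$: under $\mathcal{T}_1$ action $0$ self-loops and action $1$ moves to state $1$ with probability $\delta$ (else stays), while under $\mathcal{T}_2$ the roles of the two actions ar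e swapped.
   Context: For a transition model $\mathcal{T}$ and policy $\pi$ (stationary, or non-stationary $\pi=(\pi_0,\pi_1,\dots)$), $J_{\mathcal{T}}(\pi)=\mathbb{E}\big[\sum_{t\ge0}\gamma^t\mathcal{R}(s_t,a_t)\big]$ with $s_0\sim d_0$, $a_t\sim\pi_t(\cdot\mid s_t)$, $s_{t+1}\sim\mathcal{T}(\cdot\mid s_t,a_t)$. A task is an MDP without transition model, $(\mathcal{S},\mathcal{A},\_,d_0,\mathcal{R},\gamma)$; a policy set is any set of such policies. $(\mathcal{T},\mathcal{T}')$ is $\varepsilon$-exploitable relative to $\Pi$ and a task if there exist $\pi,\pi'\in\Pi$ with $J_{\mathcal{T}}(\pi)-J_{\mathcal{T}}(\pi')>\varepsilon$ and $J_{\mathcal{T}'}(\pi')-J_{\mathcal{T}'}(\pi)>\varepsilon$; otherwise $\varepsilon$-unexploitable. *)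

(* Defs.v *)
From HB Require Import structures.
From mathcomp Require Import all_boot all_order all_algebra.
From mathcomp Require Import all_classical all_reals all_analysis.
Set Implicit Arguments. Unset Strict Implicit. Unset Printing Implicit Defensive.
Import Order.TTheory GRing.Theory Num.Theory.
Import numFieldNormedType.Exports.
Local Open Scope classical_set_scope.
Local Open Scope ring_scope.

Section MDP.
Variables (R : realType) (S A : finType).

Definition is_dist (T : finType) (p : T -> R) : Prop :=
  (forall x, 0 <= p x) /\ \sum_(x : T) p x = 1.

(** transition model T(s' | s, a) written  T s a s' *)
Definition is_transition (T : S -> A -> S -> R) : Prop :=
  forall s a, is_dist (T s a).

(** (possibly non-stationary) policy pi_t(a | s) written  pi t s a *)
Definition policy := nat -> S -> A -> R.

Definition is_policy (pi : policy) : Prop :=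
  forall t s, is_dist (pi t s).

Definition is_stationary (pi : policy) : Prop :=
  forall t, pi t = pi 0%N.

Fixpoint state_dist (d0 : S -> R) (T : S -> A -> S -> R) (pi : policy)
    (t : nat) : S -> R :=
  match t with
  | 0%N => d0
  | t'.+1 => fun s' => \sum_(s : S) \sum_(a : A)
        state_dist d0 T pi t' s * pi t' s a * T s a s'
  end.

Definition step_reward (d0 : S -> R) (Rw : S -> A -> R) (gamma : R)
    (T : S -> A -> S -> R) (pi : policy) (t : nat) : R :=
  gamma ^+ t * \sum_(s : S) \sum_(a : A) state_dist d0 T pi t s * pi t s a * Rw s a.

Definition J (d0 : S -> R) (Rw : S -> A -> R) (gamma : R)
    (T : S -> A -> S -> R) (pi : policy) : R :=
  limn (series (step_reward d0 Rw gamma T pi)).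

Definition exploitable (d0 : S -> R) (Rw : S -> A -> R) (gamma : R)
    (Pi : set policy) (T T' : S -> A -> S -> R) (eps : R) : Prop :=
  exists pi pi', Pi pi /\ Pi pi' /\
    J d0 Rw gamma T pi - J d0 Rw gamma T pi' > eps /\
    J d0 Rw gamma T' pi' - J d0 Rw gamma T' pi > eps.

Definition unexploitable d0 Rw gamma Pi T T' eps : Prop :=
  ~ exploitable d0 Rw gamma Pi T T' eps.

Definition tv_max (T T' : S -> A -> S -> R) : R :=
  2^-1 * \big[Num.max/0]_(s : S) \big[Num.max/0]_(a : A)
    \sum_(s' : S) `|T s a s' - T' s a s'|.

End MDP.

Definition Hbound (R : realType) (eps delta : R) : R :=
  ((1 + eps) + Num.sqrt ((1 - eps) ^+ 2 + 4 * eps / delta)) / 2.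

Definition ex_d0 (R : realType) : 'I_2 -> R := fun s => if s == ord0 then 1 else 0.
Definition ex_R (R : realType) : 'I_2 -> 'I_2 -> R :=
  fun s _ => if s == ord0 then 1 else 0.

Definition ex_T (R : realType) (delta : R) (good : 'I_2) : 'I_2 -> 'I_2 -> 'I_2 -> R :=
  fun s a s' =>
    if s == ord0 then
      (if a == good then (if s' == ord0 then 1 else 0)
       else (if s' == ord0 then 1 - delta else delta))
    else (if s' == ord0 then 0 else 1).

Definition ex_T1 (R : realType) (delta : R) := ex_T delta ord0.
Definition ex_T2 (R : realType) (delta : R) := ex_T delta (@Ordinal 2 1 isT).

(* Main.v *)
Require Import Defs.
From mathcomp Require Import all_boot all_order all_algebra.
From mathcomp Require Import all_classical all_reals all_analysis.
From mathcomp Require Import ring lra.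
Import Order.TTheory GRing.Theory Num.Theory.
Import numFieldNormedType.Exports.
Local Open Scope classical_set_scope.
Local Open Scope ring_scope.

Section P1.
Variables (R : realType) (S A : finType).
Variables (d0 : S -> R) (T T' : S -> A -> S -> R) (pi : policy R S A).
Hypothesis hd0 : is_dist d0.
Hypothesis hT : is_transition T.
Hypothesis hT' : is_transition T'.
Hypothesis hpi : is_policy pi.

Lemma sd_ge0 (U : S -> A -> S -> R) : is_transition U ->
  forall t s, 0 <= state_dist d0 U pi t s.
Proof.
move=> hU; elim=> [|t IH] s /=; first by case: hd0.
apply: sumr_ge0 => s1 _; apply: sumr_ge0 => a _.
apply: mulr_ge0; first apply: mulr_ge0 => //; first by case: (hpi t s1).
by case: (hU s1 a).
Qed.

Lemma sd_sum1 (U : S -> A -> S -> R) : is_transition U ->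
  forall t, \sum_s state_dist d0 U pi t s = 1.
Proof.
move=> hU; elim=> [|t IH] /=; first by case: hd0.
rewrite exchange_big /= -IH; apply: eq_bigr => s _.
rewrite exchange_big /=.
transitivity (\sum_a state_dist d0 U pi t s * pi t s a).
  apply: eq_bigr => a _; rewrite -mulr_sumr; by case: (hU s a) => _ ->; rewrite mulr1.
by rewrite -mulr_sumr; case: (hpi t s) => _ ->; rewrite mulr1.
Qed.

Definition ovl t := \sum_s Num.min (state_dist d0 T pi t s) (state_dist d0 T' pi t s).

Lemma min2 (x y : R) : Num.min x y * 2 = x + y - `|x - y|.
Proof.
case: (leP x y) => h.
  rewrite (ler0_norm); last by rewrite subr_le0.
  lra.
rewrite (ger0_norm); last by rewrite subr_ge0 ltW.
lra.
Qed.

Variable delta : R.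
Hypothesis hdelta : forall s a, \sum_s' `|T s a s' - T' s a s'| <= delta * 2.

Lemma summin s a : 1 - delta <= \sum_s' Num.min (T s a s') (T' s a s').
Proof.
have : (1 - delta) * 2 <= (\sum_s' Num.min (T s a s') (T' s a s')) * 2.
  rewrite mulr_suml; under eq_bigr do rewrite min2.
  rewrite sumrB big_split /=.
  case: (hT s a) => _ ->; case: (hT' s a) => _ ->.
  have := hdelta s a; lra.
by rewrite ler_pM2r.
Qed.

Lemma ovl_step t : (1 - delta) * ovl t <= ovl t.+1.
Proof.
set d := state_dist d0 T pi t; set d' := state_dist d0 T' pi t.
have hd := sd_ge0 T hT t; have hd' := sd_ge0 T' hT' t.
have hc s : 0 <= Num.min (d s) (d' s) by rewrite le_min hd hd'.
have hp s a : 0 <= pi t s a by case: (hpi t s).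
apply: (@le_trans _ _ (\sum_s' \sum_s \sum_a Num.min (d s) (d' s) * pi t s a *
          Num.min (T s a s') (T' s a s'))).
  rewrite exchange_big /= /ovl mulr_sumr; apply: ler_sum => s _.
  rewrite exchange_big /=.
  apply: (@le_trans _ _ (\sum_a Num.min (d s) (d' s) * pi t s a * (1 - delta))).
    rewrite -mulr_suml -mulr_sumr; case: (hpi t s) => _ ->; rewrite mulr1 mulrC //.
  apply: ler_sum => a _; rewrite -mulr_sumr; apply: ler_wpM2l; first exact: mulr_ge0.
  exact: summin.
rewrite /ovl /=; apply: ler_sum => s' _; rewrite le_min; apply/andP; split;
  apply: ler_sum => s _; apply: ler_sum => a _.
  apply: ler_pM; [exact: mulr_ge0|by rewrite le_min; case: (hT s a) => -> _; case: (hT' s a) => -> _|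
    by apply: ler_wpM2r => //; rewrite ge_min lexx|by rewrite ge_min lexx].
apply: ler_pM; [exact: mulr_ge0|by rewrite le_min; case: (hT s a) => -> _; case: (hT' s a) => -> _|
    by apply: ler_wpM2r => //; rewrite ge_min lexx orbT|by rewrite ge_min lexx orbT].
Qed.

Hypothesis hdel : 0 <= delta <= 1.

Lemma ovl_pow t : (1 - delta) ^+ t <= ovl t.
Proof.
elim: t => [|t IH].
  by rewrite /ovl /= expr0; under eq_bigr do rewrite minxx; case: hd0 => _ ->.
rewrite exprS; apply: le_trans (ovl_step t); apply: ler_wpM2l => //.
case/andP: hdel => _; rewrite subr_ge0 //.
Qed.

Variables (Rw : S -> A -> R) (gamma : R).
Hypothesis hR : forall s a, 0 <= Rw s a <= 1.
Hypothesis hg : 0 <= gamma < 1.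

Lemma r_bounds t s : 0 <= \sum_a pi t s a * Rw s a <= 1.
Proof.
apply/andP; split.
  apply: sumr_ge0 => a _; apply: mulr_ge0; [by case: (hpi t s)|by case/andP: (hR s a)].
case: (hpi t s) => hp <-; apply: ler_sum => a _.
rewrite -[X in _ <= X]mulr1; apply: ler_wpM2l => //; by case/andP: (hR s a).
Qed.

Lemma inner_eq (U : S -> A -> S -> R) t :
  \sum_s \sum_a state_dist d0 U pi t s * pi t s a * Rw s a =
  \sum_s state_dist d0 U pi t s * \sum_a pi t s a * Rw s a.
Proof. by apply: eq_bigr => s _; rewrite mulr_sumr; apply: eq_bigr => a _; rewrite mulrA. Qed.

Lemma rew_diff t :
  \sum_s \sum_a state_dist d0 T pi t s * pi t s a * Rw s a -
  \sum_s \sum_a state_dist d0 T' pi t s * pi t s a * Rw s a <= 1 - ovl t.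
Proof.
rewrite !inner_eq -(sd_sum1 T hT t) /ovl -!sumrB; apply: ler_sum => s _.
have := r_bounds t s; set r := \sum_a _.
have := sd_ge0 T hT t s; have := sd_ge0 T' hT' t s.
set x := state_dist _ _ _ _ s; set y := state_dist _ _ _ _ s.
move=> hy hx /andP[hr0 hr1].
case: (leP x y) => h; nra.
Qed.

Lemma step_ge0 (U : S -> A -> S -> R) : is_transition U -> forall t,
  0 <= step_reward d0 Rw gamma U pi t.
Proof.
move=> hU t; rewrite /step_reward inner_eq; apply: mulr_ge0.
  by apply: exprn_ge0; case/andP: hg.
apply: sumr_ge0 => s _; apply: mulr_ge0; first exact: sd_ge0.
by case/andP: (r_bounds t s).
Qed.

Lemma step_le (U : S -> A -> S -> R) : is_transition U -> forall t,
  step_reward d0 Rw gamma U pi t <= gamma ^+ t.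
Proof.
move=> hU t; rewrite /step_reward inner_eq -[X in _ <= X]mulr1.
apply: ler_wpM2l; first by apply: exprn_ge0; case/andP: hg.
rewrite -(sd_sum1 U hU t); apply: ler_sum => s _.
rewrite -[X in _ <= X]mulr1; apply: ler_wpM2l; first exact: sd_ge0.
by case/andP: (r_bounds t s).
Qed.

Lemma step_diff t : step_reward d0 Rw gamma T pi t - step_reward d0 Rw gamma T' pi t
   <= gamma ^+ t - (gamma * (1 - delta)) ^+ t.
Proof.
rewrite /step_reward -mulrBr exprMn -[X in _ <= X - _]mulr1 -mulrBr.
apply: ler_wpM2l; first by apply: exprn_ge0; case/andP: hg.
apply: le_trans (rew_diff t) _; have := ovl_pow t; lra.
Qed.

Lemma series_cvg (U : S -> A -> S -> R) : is_transition U ->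
  cvgn (series (step_reward d0 Rw gamma U pi)).
Proof.
move=> hU; apply: (@series_le_cvg R (step_reward d0 Rw gamma U pi) (geometric 1 gamma)).
- exact: step_ge0.
- by move=> n; rewrite /geometric /= mul1r; apply: exprn_ge0; case/andP: hg.
- by move=> n; rewrite /geometric /= mul1r; apply: step_le.
- apply: is_cvg_geometric_series; case/andP: hg => h0 h1; rewrite ger0_norm //.
Qed.

Lemma J_diff : J d0 Rw gamma T pi - J d0 Rw gamma T' pi <=
  (1 - gamma)^-1 - (1 - gamma * (1 - delta))^-1.
Proof.
case/andP: hg => g0 g1; case/andP: hdel => de0 de1.
rewrite /J -limB; [|exact: series_cvg|exact: series_cvg].
apply: limr_le; first by apply: is_cvgB; apply: series_cvg.
apply: nearW => n /=.
have key : series (step_reward d0 Rw gamma T pi) n - series (step_reward d0 Rw gamma T' pi) n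
   <= series (geometric 1 gamma) n - series (geometric 1 (gamma * (1 - delta))) n.
  rewrite /series /= -!sumrB; apply: ler_sum => k _; rewrite /geometric /= !mul1r.
  exact: step_diff.
apply: le_trans key _.
have hb : 0 < 1 - gamma by lra.
have hab : 1 - gamma <= 1 - gamma * (1 - delta) by nra.
have ha : 0 < 1 - gamma * (1 - delta) by lra.
rewrite !geometric_seriesE /=; [| rewrite lt_eqF //; nra | rewrite lt_eqF //].
rewrite exprMn !mul1r.
have hp : 0 <= gamma ^+ n by apply: exprn_ge0.
have hq0 : 0 <= (1 - delta) ^+ n by apply: exprn_ge0; lra.
have hq1 : (1 - delta) ^+ n <= 1 by apply: exprn_ile1; lra.
have hinv : (1 - gamma * (1 - delta))^-1 <= (1 - gamma)^-1.
  by rewrite lef_pV2 ?posrE.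
have hia : 0 <= (1 - gamma * (1 - delta))^-1 by rewrite invr_ge0 ltW.
have key2 : gamma ^+ n * (1 - delta) ^+ n * (1 - gamma * (1 - delta))^-1
   <= gamma ^+ n * 1 * (1 - gamma)^-1.
  apply: ler_pM => //; [exact: mulr_ge0|exact: ler_wpM2l].
move: key2; set ia := (1 - gamma * (1 - delta))^-1; set ib := (1 - gamma)^-1.
set p := gamma ^+ n; set q := (1 - delta) ^+ n.
move=> key2; nra.
Qed.
End P1.
Lemma alg1 (R : realType) (g del e : R) : 0 <= g < 1 -> 0 < del <= 1 -> 0 < e ->
  (1 - g)^-1 <= Hbound e del -> (1 - g)^-1 - (1 - g * (1 - del))^-1 <= e.
Proof.
move=> /andP[g0 g1] /andP[d0 d1] e0.
rewrite /Hbound.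
set X := (1 - e) ^+ 2 + 4 * e / del.
have k0 : 0 < e / del by rewrite divr_gt0.
have kd : e / del * del = e by rewrite divfK // gt_eqF.
move: k0 kd; set k := e / del => k0 kd.
have X0 : 0 <= X by rewrite /X -mulrA; apply: addr_ge0; [exact: sqr_ge0|rewrite mulr_ge0 // ltW].
have r0 : 0 <= Num.sqrt X := sqrtr_ge0 X.
have r2 : Num.sqrt X ^+ 2 = X := sqr_sqrtr X0.
move: r0 r2; set r := Num.sqrt X => r0 r2.
have hb : 0 < 1 - g by lra.
have hh : (1 - g)^-1 * (1 - g) = 1 by rewrite mulVf // gt_eqF.
have ha : 0 < 1 - g * (1 - del) by nra.
have hh' : (1 - g * (1 - del))^-1 * (1 - g * (1 - del)) = 1 by rewrite mulVf // gt_eqF.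
move: hh hh'; set h := (1 - g)^-1; set g' := (1 - g * (1 - del))^-1 => hh hh' hH.
have h1 : 1 <= h by nra.
have rX : r ^+ 2 = (1 - e) ^+ 2 + 4 * k by rewrite r2 /X -mulrA.
have re : e - 1 <= r by nra.
have sq : (h - 1) * (h - e) <= k by nra.
have sq2 : del * ((h - 1) * (h - e)) <= e by nra.
have hg : h * g = h - 1 by nra.
set a := 1 - g * (1 - del) in ha hh'.
have ha' : h * a = 1 + (h - 1) * del by rewrite /a; nra.
have s1 : (h - 1) * del * h <= e * a * h.
  have -> : e * a * h = e * (1 + (h - 1) * del) by rewrite -ha'; ring.
  nra.
have s2 : (h - 1) * del <= e * a by rewrite -(ler_pM2r (_ : 0 < h)) //; lra.
have s3 : (h - g') * a <= e * a by nra.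
by rewrite -(ler_pM2r ha).
Qed.

Lemma alg2 (R : realType) (g del e : R) : 0 <= g < 1 -> 0 < del <= 1 -> 0 < e ->
  Hbound e del < (1 - g)^-1 -> e < (1 - g)^-1 - (1 - g * (1 - del))^-1.
Proof.
move=> /andP[g0 g1] /andP[d0 d1] e0.
rewrite /Hbound.
set X := (1 - e) ^+ 2 + 4 * e / del.
have k0 : 0 < e / del by rewrite divr_gt0.
have kd : e / del * del = e by rewrite divfK // gt_eqF.
move: k0 kd; set k := e / del => k0 kd.
have X0 : 0 <= X by rewrite /X -mulrA; apply: addr_ge0; [exact: sqr_ge0|rewrite mulr_ge0 // ltW].
have r0 : 0 <= Num.sqrt X := sqrtr_ge0 X.
have r2 : Num.sqrt X ^+ 2 = X := sqr_sqrtr X0.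
move: r0 r2; set r := Num.sqrt X => r0 r2.
have hb : 0 < 1 - g by lra.
have hh : (1 - g)^-1 * (1 - g) = 1 by rewrite mulVf // gt_eqF.
have ha : 0 < 1 - g * (1 - del) by nra.
have hh' : (1 - g * (1 - del))^-1 * (1 - g * (1 - del)) = 1 by rewrite mulVf // gt_eqF.
move: hh hh'; set h := (1 - g)^-1; set g' := (1 - g * (1 - del))^-1 => hh hh' hH.
have h1 : 1 <= h by nra.
have rX : r ^+ 2 = (1 - e) ^+ 2 + 4 * k by rewrite r2 /X -mulrA.
have sq : k < (h - 1) * (h - e) by nra.
have sq2 : e < del * ((h - 1) * (h - e)) by nra.
have hg : h * g = h - 1 by nra.
set a := 1 - g * (1 - del) in ha hh'.
have ha' : h * a = 1 + (h - 1) * del by rewrite /a; nra.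
have s1 : e * a * h < (h - 1) * del * h.
  have -> : e * a * h = e * (1 + (h - 1) * del) by rewrite -ha'; ring.
  nra.
have s2 : e * a < (h - 1) * del by rewrite -(ltr_pM2r (_ : 0 < h)) //; lra.
have s3 : e * a < (h - g') * a by nra.
by rewrite -(ltr_pM2r ha).
Qed.
Section Ex.
Variable R : realType.
Definition pol (a0 : 'I_2) : policy R 'I_2 'I_2 := fun _ _ a => if a == a0 then 1 else 0.

Lemma pol_ok a0 : is_policy (pol a0) /\ is_stationary (pol a0).
Proof.
split => // t s; split; first by move=> a; rewrite /pol; case: ifP.
rewrite !big_ord_recl big_ord0 /pol /=.
by case: a0 => [[|[|]]] //= _; rewrite ?addr0 ?add0r.
Qed.

Lemma ex_trans (del : R) good : 0 <= del <= 1 -> is_transition (ex_T (R:=R) del good).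
Proof.
move=> /andP[d0 d1] s a; split.
  by move=> s'; rewrite /ex_T; repeat case: ifP => _ //; lra.
rewrite !big_ord_recl big_ord0 /ex_T /=.
case: s => [[|[|]]] //= _; rewrite ?addr0 ?add0r. all: try case: ifP => _; try lra.
Qed.

Lemma ord2_cases (i : 'I_2) : i = ord0 \/ i = @Ordinal 2 1 isT.
Proof. by case: i => [[|[|]]] // p; [left|right]; apply: val_inj. Qed.

Definition cc (del : R) (good a0 : 'I_2) : R := if a0 == good then 1 else 1 - del.

Lemma ex_sd (del : R) good a0 t s :
  state_dist (@ex_d0 R) (ex_T del good) (pol a0) t s =
  if s == ord0 then cc del good a0 ^+ t else 1 - cc del good a0 ^+ t.
Proof.
elim: t s => [|t IH] s.
  by rewrite /= /ex_d0 expr0; case: ifP => _; rewrite ?subrr.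
rewrite /= !big_ord_recl !big_ord0 !IH /pol /ex_T /cc exprS; clear IH.
case: (ord2_cases s) => ->; case: (ord2_cases a0) => ->; case: (ord2_cases good) => -> /=;
  rewrite ?expr1n; ring.
Qed.

Lemma ex_J (del gamma : R) good a0 : 0 <= del <= 1 -> 0 <= gamma < 1 ->
  J (@ex_d0 R) (@ex_R R) gamma (ex_T del good) (pol a0) =
  (1 - gamma * cc del good a0)^-1.
Proof.
move=> /andP[d0 d1] /andP[g0 g1].
have c0 : 0 <= cc del good a0 by rewrite /cc; case: ifP => _; lra.
have c1 : cc del good a0 <= 1 by rewrite /cc; case: ifP => _; lra.
have hz : `|gamma * cc del good a0| < 1.
  rewrite ger0_norm ?mulr_ge0 //; nra.
have E : step_reward (@ex_d0 R) (@ex_R R) gamma (ex_T del good) (pol a0) =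
         geometric 1 (gamma * cc del good a0).
  apply/funext => t; rewrite /step_reward /geometric /= mul1r exprMn.
  congr (_ * _); rewrite !big_ord_recl !big_ord0 !ex_sd /ex_R /pol /=.
  case: (ord2_cases a0) => -> /=; ring.
rewrite /J E (cvg_lim _ (@cvg_geometric_series R 1 _ hz)) ?mul1r //.
Qed.

Lemma ex_tv (del : R) : 0 <= del -> tv_max (ex_T1 del) (ex_T2 del) = del.
Proof.
move=> d0.
rewrite /tv_max /ex_T1 /ex_T2 /ex_T !big_ord_recl !big_ord0 /=.
have -> : 1 - (1 - del) = del by ring.
have -> : 1 - del - 1 = - del by ring.
rewrite !subr0 sub0r !subrr normrN !normr0 !addr0 (ger0_norm d0) maxxx.
have h2 : 0 <= del + del by lra.
rewrite !maxxx (max_l h2) maxxx (max_l h2).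
by field.
Qed.
End Ex.

Theorem mainTheorem14 (R : realType) :
  (forall (S A : finType) (d0 : S -> R) (gamma : R) (Rw : S -> A -> R)
          (T T' : S -> A -> S -> R) (eps : R),
      is_dist d0 -> 0 <= gamma < 1 ->
      (forall s a, 0 <= Rw s a <= 1) ->
      is_transition T -> is_transition T' -> T <> T' ->
      0 < tv_max T T' -> 0 < eps ->
      (1 - gamma)^-1 <= Hbound eps (tv_max T T') ->
      forall Pi : set (policy R S A),
        (forall pi, Pi pi -> is_policy pi) ->
        unexploitable d0 Rw gamma Pi T T' eps)
  /\
  (forall (delta eps gamma : R),
      0 < delta <= 1 -> 0 < eps -> 0 <= gamma < 1 ->
      (1 - gamma)^-1 > Hbound eps delta ->
      is_transition (ex_T1 delta) /\ is_transition (ex_T2 delta) /\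
      tv_max (ex_T1 delta) (ex_T2 delta) = delta /\
      exploitable (@ex_d0 R) (@ex_R R) gamma
        [set pi | is_policy pi /\ is_stationary pi]
        (ex_T1 delta) (ex_T2 delta) eps).
Proof.
split.
  move=> S A d0 gamma Rw T T' eps hd0 hg hR hT hT' _ hdpos heps hH Pi hPi.
  move=> [pi [pi' [Ppi [Ppi' [h1 h2]]]]].
  move: hdpos hH; set del := tv_max T T' => hdpos hH.
  have hsum s a : \sum_s' `|T s a s' - T' s a s'| <= del * 2.
    have := le_bigmax 0 (fun a => \sum_s' `|T s a s' - T' s a s'|) a.
    have := le_bigmax 0 (fun s => \big[Num.max/0]_a \sum_s' `|T s a s' - T' s a s'|) s.
    rewrite /del /tv_max /=; lra.
  have hsum' s a : \sum_s' `|T' s a s' - T s a s'| <= del * 2.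
    by under eq_bigr do rewrite distrC; apply: hsum.
  have hdel1 : del <= 1.
    have : \big[Num.max/0]_s \big[Num.max/0]_a \sum_s' `|T s a s' - T' s a s'| <= 2.
      apply: bigmax_le => // s _; apply: bigmax_le => // a _.
      apply: le_trans (_ : \sum_s' (T s a s' + T' s a s') <= 2).
        apply: ler_sum => s' _; apply: le_trans (ler_normB _ _) _.
        case: (hT s a) => p0 _; case: (hT' s a) => p0' _.
        by rewrite !ger0_norm.
      by rewrite big_split /=; case: (hT s a) => _ ->; case: (hT' s a) => _ ->.
    rewrite /del /tv_max; lra.
  have hd01 : 0 <= del <= 1 by apply/andP; split; [exact: ltW|].
  have J1 := @J_diff R S A d0 T T' pi hd0 hT hT' (hPi _ Ppi) del hsum hd01 Rw gamma hR hg.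
  have J2 := @J_diff R S A d0 T' T pi' hd0 hT' hT (hPi _ Ppi') del hsum' hd01 Rw gamma hR hg.
  have hdd : 0 < del <= 1 by apply/andP; split.
  have H2 := @alg1 R gamma del eps hg hdd heps hH.
  lra.
move=> del eps gamma hd he hg hH.
have hd' : 0 <= del <= 1 by case/andP: hd => a b; apply/andP; split => //; exact: ltW.
split; first exact: ex_trans.
split; first exact: ex_trans.
split; first by apply: ex_tv; case/andP: hd' => //.
exists (pol R ord0), (pol R (@Ordinal 2 1 isT)).
split; first exact: pol_ok.
split; first exact: pol_ok.
rewrite /ex_T1 /ex_T2 !ex_J // /cc /= mulr1.
have := @alg2 R gamma del eps hg hd he hH.
lra.
Qed.
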